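(* Let $K$ be a nonempty compact subset of $\mathbb R^d$, let $n\ge1$ and $q\le0$. There exists $\nu_n\in\mathcal P(K)$ with finite support such that for every finitely supported $\mu=\sum_{i=1}^Np_i\delta_{x_i}\in\mathcal P(K)$ (with $p_i>0$) and every $\theta\in(0,1)$, the measure $\nu=(1-\theta)\mu+\theta\nu_n$ satisfies $$I_\nu(3\cdot2^{-n},q)\le N(1-\theta)^qa^q+\theta^q+\frac{\theta^q}{2^q}C_n(K)^{1-q},$$ where $a=\min_ip_i$. Moreover $\nu(B(x,3\cdot2^{-n}))>0$ for every $x\in K$.
   Context: $\mathcal P(K)$ is the set of Borel probability measures on $K$. Balls $B(x,r)$ are taken with respect to the $\ell^\infty$ norm on $\mathbb R^d$, and $I_\nu(r,q)=\int_K\nu(B(x,r))^{q-1}d\nu(x)$. $C_n(K)$ is the number of connected components of the union of the half-closed dyadic cubes $\prod_{j=1}^d[k_j2^{-n},(k_j+1)2^{-n})$, $k_j\in\mathbb Z$, that meet $K$. *)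

(* Defs.v *)
From HB Require Import structures.
From mathcomp Require Import all_boot all_order all_algebra.
From mathcomp Require Import all_classical all_reals all_analysis.
From mathcomp Require Import finmap.
Set Implicit Arguments. Unset Strict Implicit. Unset Printing Implicit Defensive.
Import Order.TTheory GRing.Theory Num.Theory numFieldNormedType.Exports.
Local Open Scope classical_set_scope.
Local Open Scope ring_scope.

Section Defs.
Variables (R : realType) (d : nat).
Notation pt := 'rV[R]_d.

Definition linf_ball (x : pt) (r : R) : set pt :=
  [set y | forall j : 'I_d, `|y ord0 j - x ord0 j| <= r].

Definition dyadic_cube (n : nat) (k : 'I_d -> int) : set pt :=
  [set y | forall j : 'I_d,
     (k j)%:~R / 2 ^+ n <= y ord0 j /\ y ord0 j < (k j + 1)%:~R / 2 ^+ n].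

Definition dyadic_cover (K : set pt) (n : nat) : set pt :=
  \bigcup_(k in [set k | dyadic_cube n k `&` K !=set0]) dyadic_cube n k.

(* C_n(K): number of connected components of the union of the cubes
   (0 by convention if there were infinitely many; never the case for compact K) *)
Definition Cn (K : set pt) (n : nat) : nat :=
  #|` fset_set (@connected_component pt (dyadic_cover K n) @` dyadic_cover K n) |%fset.

(* A finitely supported measure sum_i w_i delta_{x_i} given as a list of
   (atom, weight) pairs. *)
Definition dmeas := seq (pt * R).

Definition dmass (m : dmeas) (A : set pt) : R :=
  \sum_(p <- m) (if `[< A p.1 >] then p.2 else 0).

Definition dint (m : dmeas) (f : pt -> R) : R := \sum_(p <- m) p.2 * f p.1.

Definition Inu (m : dmeas) (r q : R) : R :=
  dint m (fun x => powR (dmass m (linf_ball x r)) (q - 1)).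

Definition fs_prob (K : set pt) (m : dmeas) : Prop :=
  (forall p, p \in m -> K p.1 /\ 0 < p.2) /\ \sum_(p <- m) p.2 = 1.

Definition dmix (t : R) (m1 m2 : dmeas) : dmeas :=
  [seq (p.1, (1 - t) * p.2) | p <- m1] ++ [seq (p.1, t * p.2) | p <- m2].

Definition minweight (m : dmeas) : R := \big[Order.min/1]_(p <- m) p.2.

End Defs.

(* Main.v *)
Require Import Defs.
From HB Require Import structures.
From mathcomp Require Import all_boot all_order all_algebra.
From mathcomp Require Import all_classical all_reals all_analysis.
From mathcomp Require Import finmap.
From mathcomp Require Import ring lra zify.
Import Order.TTheory GRing.Theory Num.Theory numFieldNormedType.Exports.
Local Open Scope classical_set_scope.
Local Open Scope ring_scope.

Set Implicit Arguments. Unset Strict Implicit. Unset Printing Implicit Defensive.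

Section Cubes.
Variables (R : realType) (d : nat) (n N0 : nat).
Notation pt := 'rV[R]_d.
Definition Idx := {ffun 'I_d -> 'I_(N0.*2.+1)}.
Definition dec (f : Idx) : 'I_d -> int := fun l => (f l : nat)%:Z - N0%:Z.

Lemma enc_exists (k : 'I_d -> int) :
  (forall l, - (N0%:Z) <= k l <= N0%:Z) -> exists f : Idx, dec f = k.
Proof.
move=> kb; exists [ffun l => inord (absz (k l + N0%:Z))].
apply: funext => l; rewrite /dec ffunE.
have [k1 k2] := andP (kb l).
have e0 : 0 <= k l + N0%:Z by rewrite -lerBlDr sub0r.
rewrite inordK; last first.
  rewrite ltnS -lez_nat (gez0_abs e0) -addnn PoszD; apply: lerD => //.
rewrite (gez0_abs e0); by rewrite addrK.
Qed.

Lemma cube_bound (M0 : R) (x : pt) (k : 'I_d -> int) :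
  M0 * 2 ^+ n + 1 <= N0%:R -> (forall l, `|x ord0 l| <= M0) ->
  dyadic_cube n k x -> forall l, - (N0%:Z) <= k l <= N0%:Z.
Proof.
move=> hN xb kx l; have [c1 c2] := kx l.
have p0 : (0 : R) < 2 ^+ n by rewrite exprn_gt0.
have := xb l; rewrite ler_norml => /andP[x1 x2].
rewrite ler_pdivrMr // in c1; rewrite ltr_pdivlMr // in c2.
have m1 : x ord0 l * 2 ^+ n <= M0 * 2 ^+ n by rewrite ler_pM2r.
have m2 : - M0 * 2 ^+ n <= x ord0 l * 2 ^+ n by rewrite ler_pM2r.
have a1 : (k l)%:~R <= (N0%:R : R) by lra.
have a2 : - (N0%:R : R) < (k l + 1)%:~R by rewrite intrD; rewrite intrD in c2; lra.
apply/andP; split.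
  rewrite intrD in a2.
  have : (- (N0%:Z) - 1 : int)%:~R < (k l : int)%:~R :> R.
    by rewrite intrB intrN; move: a2; rewrite -ltrBlDr.
  rewrite ltr_int; lia.
by rewrite -(ler_int R).
Qed.

Lemma in_some_cube (x : pt) : exists k, dyadic_cube n k x.
Proof.
exists (fun l => Num.floor (x ord0 l * 2 ^+ n)) => l.
have p0 : (0 : R) < 2 ^+ n by rewrite exprn_gt0.
have /andP[a b] := floor_itv (x ord0 l * 2 ^+ n).
by rewrite ler_pdivrMr // ltr_pdivlMr.
Qed.

Lemma same_cube_close (k : 'I_d -> int) (y y' : pt) :
  dyadic_cube n k y -> dyadic_cube n k y' -> forall l, `|y ord0 l - y' ord0 l| < 2 ^- n.
Proof.
move=> ky ky' l; have [a1 a2] := ky l; have [b1 b2] := ky' l.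
move: a2 b2; rewrite intrD mulrDl mul1r => a2 b2.
rewrite ltr_norml; apply/andP; split; lra.
Qed.
End Cubes.
Section Top1.
Variables (R : realType) (d : nat).
Notation pt := 'rV[R]_d.

Lemma cube_comp (n : nat) (k : 'I_d -> int) (A : set pt) (y y' : pt) :
  dyadic_cube n k `<=` A -> dyadic_cube n k y -> dyadic_cube n k y' ->
  connected_component A y y'.
Proof.
move=> kA ky ky'.
pose f := fun t : R => y + t *: (y' - y).
have cf : continuous f.
  move=> t.
  have h1 : {for t, continuous (fun s : R => s *: (y' - y))}.
    by apply: continuousZr_tmp; apply: cvg_id.
  have := continuousD (@cst_continuous _ _ y t) h1.
  exact.
have Sc : connected (f @` `[0, 1]).
  apply: connected_continuous_connected; first exact: segment_connected.
  exact: continuous_subspaceT.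
have SA : f @` `[0, 1] `<=` A.
  move=> _ [t /= t01 <-]; apply: kA => j.
  move: t01; rewrite in_itv /= => /andP[t0 t1].
  have [a1 a2] := ky j; have [b1 b2] := ky' j.
  rewrite /f !mxE; split.
    nra.
  case: (leP (y' ord0 j) (y ord0 j)) => H; nra.
have y'S : (f @` `[0, 1]) y'.
  exists 1; first by rewrite /= in_itv /= lexx ler01.
  by rewrite /f scale1r addrC subrK.
apply: (connected_component_max _ SA Sc) y'S.
exists 0; first by rewrite /= in_itv /= lexx ler01.
by rewrite /f scale0r addr0.
Qed.

Lemma normE (x : pt) : `|x| = \big[Num.max/0]_ij `|x ij.1 ij.2|.
Proof. exact: mx_normrE. Qed.

Lemma coord_le_norm (x : pt) j : `|x ord0 j| <= `|x|.
Proof. rewrite normE; exact: (le_bigmax _ (fun ij : 'I_1 * 'I_d => `|x ij.1 ij.2|) (ord0, j)). Qed.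

Lemma norm_ltP (x : pt) (h : R) : 0 < h -> (`|x| < h) <-> (forall j, `|x ord0 j| < h).
Proof.
move=> h0; split.
  by move=> H j; exact: le_lt_trans (coord_le_norm x j) H.
move=> H; rewrite normE; apply/bigmax_ltP; split => // [[i j]] _ /=.
by rewrite (ord1 i).
Qed.
Lemma compact_coord_bound (K : set pt) :
  @compact [the topologicalType of 'rV[R]_d] K ->
  exists M : R, 0 <= M /\ forall x, K x -> forall j, `|x ord0 j| <= M.
Proof.
move=> /compact_bounded [M [Mr HM]].
exists (`|M| + 1); split; first by rewrite addr_ge0.
move=> x Kx j; apply: le_trans (coord_le_norm x j) _.
have : M < `|M| + 1 by rewrite (le_lt_trans (ler_norm M)) // ltrDl.
by move=> /HM; apply.
Qed.
End Top1.

Section Graph.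
Variables (R : realType) (d : nat) (K : set 'rV[R]_d) (n N0 : nat) (M0 : R).
Notation pt := 'rV[R]_d.
Hypothesis hM : forall x, K x -> forall l, `|x ord0 l| <= M0.
Hypothesis hN : M0 * 2 ^+ n + 1 <= N0%:R.

Definition hh : R := 2 ^- n.
Lemma hgt0 : 0 < hh. Proof. by rewrite /hh invr_gt0 exprn_gt0. Qed.
Definition cube (f : Idx d N0) := dyadic_cube (R:=R) n (dec f).
Definition good (f : Idx d N0) : bool := `[< cube f `&` K !=set0 >].
Definition zz (f : Idx d N0) : pt := xget 0 (cube f `&` K).
Definition near2 (a b : pt) : bool := [forall l, `|a ord0 l - b ord0 l| <= 2 * hh].
Definition ee : rel (Idx d N0) := fun f g => [&& good f, good g & near2 (zz f) (zz g)].
Definition cover := dyadic_cover K n.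

Lemma good_zz f : good f -> cube f (zz f) /\ K (zz f).
Proof. by move=> /asboolP [x Hx]; apply: (xgetI 0 Hx). Qed.

Lemma cube_idx (x : pt) (k : 'I_d -> int) : K x -> dyadic_cube n k x ->
  exists f : Idx d N0, dec f = k.
Proof. by move=> Kx kx; apply: enc_exists; apply: (cube_bound hN (hM Kx) kx). Qed.

Lemma K_cube x : K x -> exists f, good f /\ cube f x.
Proof.
move=> Kx; have [k kx] := in_some_cube n x.
have [f fk] := cube_idx Kx kx.
exists f; split; last by rewrite /cube fk.
  by apply/asboolP; exists x; rewrite /cube fk.
Qed.

Lemma cover_cube y : cover y -> exists f, good f /\ cube f y.
Proof.
rewrite /cover /dyadic_cover => -[k /= [x [kx Kx]] ky].
have [f fk] := cube_idx Kx kx.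
exists f; split; last by rewrite /cube fk.
  by apply/asboolP; exists x; rewrite /cube fk.
Qed.

Lemma cube_sub_cover f : good f -> cube f `<=` cover.
Proof. by move=> /asboolP gf y fy; rewrite /cover /dyadic_cover; exists (dec f). Qed.

Lemma ee_sym : symmetric ee.
Proof.
move=> f g; rewrite /ee; apply/and3P/and3P => -[a b c]; split => //;
  apply/forallP => l; move/forallP: c => /(_ l); by rewrite distrC.
Qed.

Lemma ee_good f g : ee f g -> good f /\ good g.
Proof. by case/and3P. Qed.

Lemma zz_close f g : good f -> good g -> (forall l, `|zz f ord0 l - zz g ord0 l| <= 2 * hh) -> ee f g.
Proof. by move=> gf gg H; rewrite /ee gf gg /=; apply/forallP. Qed.


Lemma ballE (x y : pt) (r : R) : ball x r y = (`|x - y| < r).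
Proof. by rewrite -ball_normE. Qed.

Lemma ball_coord (x y : pt) : ball x hh y -> forall l, `|x ord0 l - y ord0 l| < hh.
Proof.
rewrite ballE => /(norm_ltP _ hgt0) H l; have := H l; by rewrite !mxE.
Qed.

Lemma coord_ball (x y : pt) : (forall l, `|x ord0 l - y ord0 l| < hh) -> ball x hh y.
Proof.
move=> H; rewrite ballE; apply/(norm_ltP _ hgt0) => l; by rewrite !mxE.
Qed.

Lemma cover_ball y : cover y -> exists f, good f /\ ball (zz f) hh y.
Proof.
move=> /cover_cube [f [gf fy]]; exists f; split => //.
apply: coord_ball; have [zf _] := good_zz gf.
exact: same_cube_close zf fy.
Qed.

Lemma comp_zz y : cover y -> exists f, good f /\
  connected_component cover y = connected_component cover (zz f).
Proof.
move=> /cover_cube [f [gf fy]]; exists f; split => //.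
apply: same_connected_component.
have [zf _] := good_zz gf.
exact: (cube_comp (cube_sub_cover gf) fy zf).
Qed.

Lemma comp_finite : finite_set (connected_component cover @` cover).
Proof.
apply: (@sub_finite_set _ _ ((fun f => connected_component cover (zz f)) @` [set f | good f])).
  move=> _ [y cy <-]; have [f [gf ->]] := comp_zz cy; by exists f.
apply: finite_image; exact: finite_finset.
Qed.

Lemma zz_cover f : good f -> cover (zz f).
Proof. move=> gf; apply: (cube_sub_cover gf); exact: (good_zz gf).1. Qed.

Lemma comp_connect i j : good i -> good j ->
  connected_component cover (zz i) = connected_component cover (zz j) -> connect ee i j.
Proof.
move=> gi gj Cij.
set C0 := connected_component cover (zz i).
pose O := \bigcup_(g in [set g | good g && connect ee i g]) ball (zz g) hh.
pose O' := \bigcup_(g in [set g | good g && ~~ connect ee i g]) ball (zz g) hh.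
have hab : forall y, O y -> O' y -> False.
  move=> y [g /= /andP[gg cg] yg] [g' /= /andP[gg' cg'] yg'].
  have eg : ee g g'.
    apply: zz_close => // l.
    have := ball_coord yg l; have := ball_coord yg' l.
    move=> a b; rewrite mulr2n mulrDl mul1r.
    apply: le_trans (ler_distD (y ord0 l) _ _) _.
    by rewrite lerD // ?ltW // distrC.
  by move/negP: cg'; apply; apply: connect_trans cg (connect1 eg).
have hcov : forall y, cover y -> O y \/ O' y.
  move=> y /cover_ball [g [gg yg]].
  case cg: (connect ee i g); [left | right]; exists g => //=; by rewrite gg cg.
have Ozi : O (zz i) by exists i; [rewrite /= gi connect0 | exact: ballxx hgt0].
have C0zi : C0 (zz i) by apply: connected_component_refl; exact: zz_cover.
have C0cov : C0 `<=` cover by exact: connected_component_sub.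
have BC : C0 `&` O = C0.
  apply: (@component_connected _ cover (zz i)).
  - by exists (zz i).
  - by exists O => //; apply: bigcup_open => g _; exact: ball_open.
  - exists (~` O'); first by apply: open_closedC; apply: bigcup_open => g _; exact: ball_open.
    apply/seteqP; split => y [C0y Hy]; split => //.
      by move=> H; exact: hab Hy H.
    by case: (hcov y (C0cov y C0y)).
have C0zj : C0 (zz j) by rewrite /C0 Cij; apply: connected_component_refl; exact: zz_cover.
have : O (zz j) by rewrite -BC in C0zj; case: C0zj.
move=> [g /= /andP[gg cg] yg].
apply: connect_trans cg (connect1 _); apply: zz_close => // l.
apply: ltW; apply: lt_le_trans (ball_coord yg l) _.
rewrite mulr2n mulrDl mul1r lerDr; exact: ltW hgt0.
Qed.

Lemma sym_ee : connect_sym ee.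
Proof. exact: sym_connect_sym ee_sym. Qed.

Lemma P_le_Cn : (#|[pred i | good i && (fingraph.root ee i == i)]| <= Cn K n)%N.
Proof.
set s := [seq i <- enum (Idx d N0) | good i && (fingraph.root ee i == i)].
have -> : #|[pred i | good i && (fingraph.root ee i == i)]| = size s.
  rewrite cardE /s /enum_mem -filter_predI; congr size; apply: eq_filter => x /=; by rewrite andbT.
rewrite /Cn -(size_map (fun i => connected_component cover (zz i))).
apply: uniq_leq_size.
  rewrite map_inj_in_uniq; first by rewrite /s filter_uniq // enum_uniq.
  move=> i j; rewrite !mem_filter => /andP[/andP[gi ri] _] /andP[/andP[gj rj] _] Cij.
  have := comp_connect gi gj Cij; rewrite -(root_connect sym_ee) (eqP ri) (eqP rj).
  by move/eqP.
move=> C /mapP[i]; rewrite mem_filter => /andP[/andP[gi ri] _] ->.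
rewrite in_fset_set; last exact: comp_finite.
rewrite in_setE; exists (zz i) => //; exact: zz_cover.
Qed.

Lemma connect_good i j : connect ee i j -> good i -> good j.
Proof.
move=> /connectP[p]; case/lastP: p => [_ -> //|p y].
rewrite rcons_path last_rcons => /andP[_ e] -> _.
by have [] := ee_good e.
Qed.

Definition Pdep (i : Idx d N0) (t : nat) : bool :=
  `[< exists p, [/\ size p = t, path ee (fingraph.root ee i) p & last (fingraph.root ee i) p = i] >].

Lemma Pdep_ex i : exists t, Pdep i t.
Proof.
have : connect ee (fingraph.root ee i) i by rewrite sym_ee connect_root.
move=> /connectP[p pp ip]; exists (size p); apply/asboolP; by exists p.
Qed.

Definition depth i := ex_minn (Pdep_ex i).

Lemma depth_le i t : Pdep i t -> (depth i <= t)%N.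
Proof. rewrite /depth; case: ex_minnP => m _ H; exact: H. Qed.

Lemma depth0 i : fingraph.root ee i != i -> (0 < depth i)%N.
Proof.
move=> ri; rewrite /depth; case: ex_minnP => m /asboolP[p [sp _ lp]] _.
rewrite lt0n; apply/eqP => m0; move: sp; rewrite m0 => /size0nil p0.
by move: lp ri; rewrite p0 /= => ->; rewrite eqxx.
Qed.

Lemma parent i : fingraph.root ee i != i ->
  exists j, [/\ ee j i, (depth j <= (depth i).-1)%N & fingraph.root ee j = fingraph.root ee i].
Proof.
move=> ri; have d0 := depth0 ri.
move: d0; rewrite /depth; case: ex_minnP => m /asboolP[p [sp pp lp]] _ m0.
move: sp pp lp; case/lastP: p => [/= sp|p y]; first by move: m0; rewrite -sp.
rewrite size_rcons rcons_path last_rcons => sp /andP[pp e] yi.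
set j := last (fingraph.root ee i) p.
have rj : fingraph.root ee j = fingraph.root ee i.
  have cj : connect ee (fingraph.root ee i) j by apply/connectP; exists p.
  by rewrite -(fingraph.rootP sym_ee cj) (root_root sym_ee).
exists j; split => //; first by rewrite -yi.
rewrite -sp /=; apply: depth_le; apply/asboolP; exists p; by rewrite rj.
Qed.

End Graph.

Section Ana.
Variable R : realType.

Lemma powR_decr (a b p : R) : 0 < a -> a <= b -> p <= 0 -> b `^ p <= a `^ p.
Proof.
move=> a0 ab p0; have b0 : 0 < b by exact: lt_le_trans ab.
rewrite /powR (gt_eqF a0) (gt_eqF b0) ler_expR.
by rewrite ler_wnM2l // ler_ln.
Qed.

Lemma mul_powR1 (x q : R) : 0 < x -> x * x `^ (q - 1) = x `^ q.
Proof.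
move=> x0; rewrite -{1}(powRr1 (ltW x0)) -powRD; first by rewrite addrC subrK.
by rewrite (gt_eqF x0) implybT.
Qed.

Lemma dmass_ge (d : nat) (m : dmeas R d) (A : set 'rV[R]_d) p :
  (forall p, p \in m -> 0 <= p.2) -> p \in m -> A p.1 -> p.2 <= dmass m A.
Proof.
move=> pos pm Ap; rewrite /dmass (big_rem p pm) /= asboolT //.
rewrite lerDl big_seq sumr_ge0 // => q qm; case: asboolP => // _.
apply: pos; exact: (mem_rem qm).
Qed.

Lemma dmass_ge0 (d : nat) (m : dmeas R d) (A : set 'rV[R]_d) :
  (forall p, p \in m -> 0 <= p.2) -> 0 <= dmass m A.
Proof.
move=> pos; rewrite /dmass big_seq_cond sumr_ge0 // => p /andP[pm _].
case: asboolP => // _; exact: pos.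
Qed.

Lemma sum_const_seq (T : Type) (s : seq T) (c : R) : \sum_(p <- s) c = (size s)%:R * c.
Proof. elim: s => [|x s IH]; first by rewrite big_nil mul0r. by rewrite big_cons IH /= mulrSr mulrDl mul1r addrC. Qed.

Lemma minweight_le (d : nat) (m : dmeas R d) p : p \in m -> minweight m <= p.2.
Proof.
rewrite /minweight; elim: m => [//|x m IH]; rewrite inE big_cons => /orP[/eqP ->|pm].
  by rewrite ge_min lexx.
by rewrite ge_min IH // orbT.
Qed.

Lemma minweight_gt0 (d : nat) (m : dmeas R d) : (forall p, p \in m -> 0 < p.2) -> 0 < minweight m.
Proof.
rewrite /minweight; elim: m => [_|x m IH H]; first by rewrite big_nil.
rewrite big_cons lt_min H ?mem_head //= IH // => p pm; apply: H; by rewrite inE pm orbT.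
Qed.

Lemma powR_invb (x p : R) : 0 < x -> (x^-1) `^ p = (x `^ p)^-1.
Proof.
move=> x0; rewrite /powR invr_eq0 (gt_eqF x0) lnV ?posrE // mulrN expRN //.
Qed.
End Ana.

Section W.
Variables (R : realType) (d : nat) (K : set 'rV[R]_d) (n N0 : nat) (M0 : R).
Hypothesis hM : forall x, K x -> forall l, `|x ord0 l| <= M0.
Hypothesis hN : M0 * 2 ^+ n + 1 <= N0%:R.
Variable q : R.
Hypothesis hq : q <= 0.
Hypothesis K0 : K !=set0.
Local Notation Ix := (Idx d N0).
Local Notation gd := (good K n (N0:=N0)).
Local Notation Ee := (ee K n (N0:=N0)).
Local Notation dep := (depth K n (N0:=N0)).

Definition rt (i : Ix) : bool := fingraph.root Ee i == i.
Definition Pn : nat := #|[pred i | gd i && rt i]|.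
Definition Mn : nat := #|[pred i | gd i]|.
Definition eta : R := (2 * Mn%:R)^-1.
Fixpoint del (t : nat) : R := if t is t'.+1 then eta * (del t') `^ (1 - q) else (2 * Pn%:R)^-1.
Definition Ssum : R := \sum_(i | gd i && ~~ rt i) del (dep i).
Definition rho : R := (1 - Ssum) / Pn%:R.
Definition om (i : Ix) : R := if rt i then rho else del (dep i).
Definition nun : dmeas R d := [seq (zz K n i, om i) | i <- [seq i <- enum Ix | gd i]].

Lemma one_le_q : 1 <= 1 - q.
Proof. by rewrite lerDl oppr_ge0. Qed.

Lemma Pn_gt0 : (0 < Pn)%N.
Proof.
have [x Kx] := K0; have [f [gf _]] := K_cube hM hN Kx.
apply/card_gt0P; exists (fingraph.root Ee f); rewrite inE /rt (root_root (@sym_ee R d K n N0)) eqxx andbT.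
by apply: connect_good gf; exact: connect_root.
Qed.

Lemma Pn_le_Mn : (Pn <= Mn)%N.
Proof. by apply: subset_leq_card; apply/fintype.subsetP => i; rewrite !inE => /andP[]. Qed.

Lemma Mn_gt0 : (0 < Mn)%N.
Proof. exact: leq_trans Pn_gt0 Pn_le_Mn. Qed.

Lemma eta_gt0 : 0 < eta.
Proof. by rewrite /eta invr_gt0 mulr_gt0 // ltr0n Mn_gt0. Qed.

Lemma eta_le1 : eta <= 1.
Proof.
rewrite /eta invr_le1 ?mulr_gt0 ?ltr0n ?Mn_gt0 //; last by rewrite unitfE mulf_neq0 // pnatr_eq0 -lt0n Mn_gt0.
have : (1 : R) <= Mn%:R by rewrite ler1n Mn_gt0.
lra.
Qed.

Lemma del0_bnd : (0 : R) < (2 * (Pn%:R : R))^-1 <= (1 : R).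
Proof.
have H : (1 : R) <= Pn%:R by rewrite ler1n Pn_gt0.
have H2 : (0 : R) < 2 * Pn%:R by lra.
rewrite invr_gt0 H2 /= invr_le1 //; first lra.
by rewrite unitfE gt_eqF.
Qed.

Lemma del_bnd t : 0 < del t <= 1.
Proof.
elim: t => [|t /andP[a b]]; first exact: del0_bnd.
rewrite /=.
have p1 : (del t) `^ (1 - q) <= del t by apply: ge1r_powR; [rewrite a b | exact: one_le_q].
have p0 : 0 < (del t) `^ (1 - q) by rewrite powR_gt0.
apply/andP; split; first by rewrite mulr_gt0 // eta_gt0.
have := eta_le1; have := eta_gt0; nra.
Qed.

Lemma del_succ t : del t.+1 <= del t /\ del t.+1 <= eta.
Proof.
have /andP[a b] := del_bnd t.
have p1 : (del t) `^ (1 - q) <= del t by apply: ge1r_powR; [rewrite a b | exact: one_le_q].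
have p0 : 0 < (del t) `^ (1 - q) by rewrite powR_gt0.
have := eta_le1; have := eta_gt0; rewrite /=; split; nra.
Qed.

Lemma del_anti a b : (a <= b)%N -> del b <= del a.
Proof.
move=> /subnK <-; elim: (b - a)%N => [|k IH]; first by rewrite add0n.
by rewrite addSn; apply: le_trans IH; exact: (del_succ _).1.
Qed.

Lemma Ssum_bnd : 0 <= Ssum <= 2^-1.
Proof.
apply/andP; split.
  by rewrite /Ssum sumr_ge0 // => i _; case/andP: (del_bnd (dep i)) => /ltW.
apply: (@le_trans _ _ (\sum_(i | gd i) eta)).
  rewrite /Ssum big_mkcondr /=; apply: ler_sum => i gi.
  case: ifP => ri; last exact: ltW eta_gt0.
  have := depth0 ri; case: (dep i) => // t _; exact: (del_succ t).2.
rewrite sumr_const /eta.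
have -> : #|(fun i => gd i)| = Mn by apply: eq_card.
by rewrite -[X in X <= _]mulr_natr invfM -mulrA mulVf ?mulr1 // pnatr_eq0 -lt0n Mn_gt0.
Qed.

Lemma rho_ge : (2 * (Pn%:R : R))^-1 <= rho.
Proof.
have /andP[_ S2] := Ssum_bnd.
have P1 : (1 : R) <= Pn%:R by rewrite ler1n Pn_gt0.
rewrite /rho invfM ler_pM2r ?invr_gt0; last by lra.
by move: S2; rewrite -(ler_pM2l (ltr0n R 2)) => H; lra.
Qed.

Lemma rho_gt0 : 0 < rho.
Proof. apply: lt_le_trans rho_ge; exact: (andP del0_bnd).1. Qed.

Lemma om_gt0 i : 0 < om i.
Proof. rewrite /om; case: ifP => _; [exact: rho_gt0 | exact: (andP (del_bnd _)).1]. Qed.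

Lemma sum_om : \sum_(i | gd i) om i = 1.
Proof.
rewrite (bigID rt) /=.
rewrite (eq_bigr (fun=> rho)); last by move=> i /andP[_ ri]; rewrite /om ri.
rewrite [X in _ + X](eq_bigr (fun i => del (dep i))); last by move=> i /andP[_ ri]; rewrite /om (negbTE ri).
rewrite sumr_const.
have -> : #|(fun i => gd i && rt i)| = Pn by apply: eq_card.
rewrite /rho /Ssum -[_ *+ Pn]mulr_natr divfK ?subrK //.
by rewrite pnatr_eq0 -lt0n Pn_gt0.
Qed.

Lemma nun_prob : fs_prob K nun.
Proof.
split.
  move=> p /mapP[i]; rewrite mem_filter => /andP[gi _] -> /=.
  split; [exact: (good_zz gi).2 | exact: om_gt0].
rewrite /nun big_map big_filter /= big_enum_cond /=; exact: sum_om.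
Qed.

Lemma nun_mem i : gd i -> (zz K n i, om i) \in nun.
Proof. by move=> gi; apply: (map_f (fun i => (zz K n i, om i))); rewrite mem_filter gi mem_enum. Qed.

Lemma om_parent i : gd i -> ~~ rt i ->
  exists j, [/\ gd j, (forall l, `|zz K n j ord0 l - zz K n i ord0 l| <= 2 * hh R n),
     del (dep i).-1 <= om j & om i = del (dep i).-1.+1].
Proof.
move=> gi ri; have [j [eji dj rj]] := parent ri.
have [gj _] := ee_good eji.
exists j; split => //.
- by move: eji; case/and3P => _ _ /forallP.
- rewrite /om; case: ifP => rtj.
    apply: le_trans rho_ge; apply: le_trans (del_anti (leq0n _)) _; exact: lexx.
  exact: del_anti.
- by rewrite /om (negbTE ri) prednK // depth0.
Qed.

Lemma term_bound (w c m : R) : 0 < w -> 0 < c -> c <= m ->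
  w * m `^ (q - 1) <= w * c `^ (q - 1).
Proof.
move=> w0 c0 cm; rewrite ler_pM2l //; apply: powR_decr => //.
by rewrite subr_le0; apply: le_trans hq _; exact: ler01.
Qed.

Lemma main_bound (mu : dmeas R d) (theta : R) :
  fs_prob K mu -> 0 < theta < 1 ->
  let nu := dmix theta mu nun in
  let r := 3 / 2 ^+ n in
  Inu nu r q <=
    (size mu)%:R * (1 - theta) `^ q * (minweight mu) `^ q
    + theta `^ q
    + theta `^ q / 2 `^ q * ((Cn K n)%:R) `^ (1 - q)
  /\ (forall x, K x -> 0 < dmass nu (linf_ball x r)).
Proof.
move=> [mupos _] /andP[t0 t1] nu r.
have t1' : 0 < 1 - theta by rewrite subr_gt0.
have hpos : forall p, p \in nu -> 0 <= p.2.
  move=> p; rewrite mem_cat => /orP[] /mapP[p' p'm ->] /=.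
    by rewrite mulr_ge0 ?ltW // (mupos _ p'm).2.
  by rewrite mulr_ge0 ?ltW // (nun_prob.1 _ p'm).2.
have memnun : forall i, gd i -> (zz K n i, theta * om i) \in nu.
  move=> i gi; rewrite mem_cat; apply/orP; right.
  exact: (map_f (fun p => (p.1, theta * p.2)) (nun_mem gi)).
have e0 : (0:R) < (2 ^+ n)^-1 by rewrite invr_gt0 exprn_gt0.
have hr : hh R n <= r by rewrite /r /hh; lra.
have hr2 : 2 * hh R n <= r by rewrite /r /hh; lra.
split; last first.
  move=> x Kx; have [f [gf fx]] := K_cube hM hN Kx.
  apply: lt_le_trans (dmass_ge hpos (memnun f gf) _) => /=.
    by rewrite mulr_gt0 // om_gt0.
  move=> l; apply: ltW; apply: lt_le_trans hr.
  exact: same_cube_close (good_zz gf).1 fx l.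
have Xdef : 0 <= ((2 * (Pn%:R : R))^-1) `^ q by exact: powR_ge0.
rewrite /Inu /dint {1}/nu /dmix big_cat !big_map /= -addrA; apply: lerD.
  apply: le_trans (_ : _ <= \sum_(p <- mu) (1 - theta) `^ q * (minweight mu) `^ q) _; last first.
    by rewrite sum_const_seq mulrA.
  rewrite big_seq [X in _ <= X]big_seq; apply: ler_sum => p pm.
  have [Kp p0] := mupos p pm.
  have w0 : 0 < (1 - theta) * p.2 by rewrite mulr_gt0.
  apply: le_trans (term_bound w0 w0 _) _.
    apply: (dmass_ge (p := (p.1, (1 - theta) * p.2)) hpos).
      rewrite mem_cat; apply/orP; left; exact: (map_f (fun p => (p.1, (1 - theta) * p.2)) pm).
    by move=> l /=; rewrite subrr normr0; apply: le_trans hr; exact: ltW (hgt0 R n).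
  rewrite mul_powR1 // (@powRM _ _ _ q (ltW t1') (ltW p0)); apply: ler_wpM2l; first exact: powR_ge0.
  apply: powR_decr => //; [apply: minweight_gt0 => p' /mupos [] // | exact: minweight_le].
set X := ((2 * (Pn%:R : R))^-1) `^ q.
rewrite big_filter big_enum_cond /=.
apply: le_trans (_ : _ <= \sum_(i | gd i) theta `^ q * ((if rt i then X else 0) + eta)) _.
  apply: ler_sum => i gi.
  case ri: (rt i).
    have c0 : 0 < theta * rho by rewrite mulr_gt0 // rho_gt0.
    have omi : om i = rho by rewrite /om ri.
    rewrite omi; apply: le_trans (term_bound c0 c0 _) _.
      apply: (dmass_ge (p := (zz K n i, theta * rho)) hpos); first by rewrite -omi; exact: memnun.
      by move=> l /=; rewrite subrr normr0; apply: le_trans hr; exact: ltW (hgt0 R n).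
    rewrite mul_powR1 // (@powRM _ _ _ q (ltW t0) (ltW rho_gt0)); apply: ler_wpM2l; first exact: powR_ge0.
    apply: le_trans (_ : X <= X + eta); last by rewrite lerDl ltW ?eta_gt0.
    by apply: powR_decr => //; [exact: (andP del0_bnd).1 | exact: rho_ge].
  have [j [gj cl dle omi]] := om_parent gi (negbT ri).
  set s := (dep i).-1 in dle omi.
  have ds0 : 0 < del s by exact: (andP (del_bnd s)).1.
  have c0 : 0 < theta * del s by rewrite mulr_gt0.
  have w0 : 0 < theta * om i by rewrite mulr_gt0 // om_gt0.
  apply: le_trans (term_bound w0 c0 _) _.
    apply: le_trans (dmass_ge (p := (zz K n j, theta * om j)) hpos (memnun j gj) _).
      by rewrite ler_pM2l.
    move=> l /=; apply: le_trans (cl l) hr2.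
  rewrite add0r omi /= (@powRM _ _ _ (q - 1) (ltW t0) (ltW ds0)).
  have AB : (del s) `^ (1 - q) * (del s) `^ (q - 1) = 1.
    rewrite -powRD; last by rewrite (gt_eqF ds0) implybT.
    by rewrite addrA subrK subrr powRr0.
  have TT : theta * theta `^ (q - 1) = theta `^ q by exact: mul_powR1.
  rewrite -TT.
  set A := del s `^ (1 - q) in AB *; set B := del s `^ (q - 1) in AB *.
  set T := theta `^ (q - 1).
  have -> : theta * (eta * A) * (T * B) = theta * T * eta * (A * B) by ring.
  by rewrite AB mulr1.
rewrite -mulr_sumr big_split /= -big_mkcondr sumr_const sumr_const.
have -> : #|(fun i => gd i && rt i)| = Pn by apply: eq_card.
have -> : #|(fun i => gd i)| = Mn by apply: eq_card.
have Mh : eta *+ Mn = 2^-1.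
  by rewrite /eta -[X in X = _]mulr_natr invfM -mulrA mulVf ?mulr1 // pnatr_eq0 -lt0n Mn_gt0.
rewrite Mh.
have P0 : (0 : R) < Pn%:R by rewrite ltr0n Pn_gt0.
have q2 : (0 : R) < 2 `^ q by rewrite powR_gt0.
have key : X *+ Pn <= (Cn K n)%:R `^ (1 - q) / 2 `^ q.
  rewrite -mulr_natl /X powR_invb ?mulr_gt0 // (@powRM _ 2 _ q) ?ler0n //.
  rewrite invfM mulrA mulrAC -[X in X / _ / _](powRr1 (ltW P0)) -powRB; last by rewrite (gt_eqF P0) implybT.
  rewrite ler_pM2r ?invr_gt0 //; apply: ge0_ler_powR; rewrite ?nnegrE ?ler0n //.
    by rewrite subr_ge0; apply: le_trans hq _; exact: ler01.
  by rewrite ler_nat; exact: P_le_Cn hM hN.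
have tq : 0 <= theta `^ q by exact: powR_ge0.
apply: le_trans (_ : _ <= theta `^ q * ((Cn K n)%:R `^ (1 - q) / 2 `^ q + 1)) _.
  apply: ler_wpM2l => //; apply: lerD => //.
  by rewrite invf_le1 // ler1n.
by rewrite le_eqVlt; apply/orP; left; apply/eqP; ring.
Qed.

End W.

Unset Implicit Arguments.

Theorem lemma2p14 (R : realType) (d : nat) (K : set 'rV[R]_d) (n : nat) (q : R) :
  @compact [the topologicalType of 'rV[R]_d] K -> K !=set0 -> (1 <= n)%N -> q <= 0 ->
  exists nun : dmeas R d,
    fs_prob K nun /\
    forall (mu : dmeas R d) (theta : R),
      fs_prob K mu -> uniq [seq p.1 | p <- mu] ->
      0 < theta < 1 ->
      let nu := dmix theta mu nun in
      let r := 3 / 2 ^+ n in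
      Inu nu r q <=
        (size mu)%:R * powR (1 - theta) q * powR (minweight mu) q
        + powR theta q
        + powR theta q / powR 2 q * powR (Cn K n)%:R (1 - q)
      /\ (forall x, K x -> 0 < dmass nu (linf_ball x r)).
Proof.
move=> cK K0 _ hq.
have [M0 [M00 hM]] := compact_coord_bound cK.
set N0 := (Num.truncn (M0 * 2 ^+ n + 1)).+1.
have hN : M0 * 2 ^+ n + 1 <= N0%:R by apply: ltW; exact: truncnS_gt.
exists (nun K n N0 q); split; first exact: (nun_prob hM hN hq K0).
move=> mu theta Hmu _ Ht; exact: (main_bound hM hN hq K0 Hmu Ht).
Qed.
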